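(* There are infinitely many $n$ for which there exists a connected graph of order $n$ that is 3-degenerate, bipartite and planar and has at least $15^{(n-1)/7}$ inclusion-minimal connected dominating sets; hence the maximum number of minimal connected dominating sets in 3-degenerate bipartite planar graphs of order $n$ is $\Omega(1.4723^n)$.
   Context: A graph is $d$-degenerate if there is an ordering $(v_1,\dots,v_n)$ of its vertices such that each $v_i$ has degree at most $d$ in $G[\{v_i,\dots,v_n\}]$. A connected dominating set of a graph $G=(V,E)$ is a set $S\subseteq V$ such that every vertex outside $S$ has a neighbor in $S$ and $G[S]$ is connected; it is (inclusion-)minimal if no proper subset is one. (The witnessing graphs are: $k\ge2$ disjoint copies of the graph on $\{x_1,x_2,x_3,y_1,y_2,y_3,z\}$ with edges $x_iy_j$ for $i\neq j$ and $zy_j$ for all $j$, plus a vertex $s$ adjacent to all $x$-vertices of all copies; order $n=7k+1$.) *)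

(* Defs.v *)
From HB Require Import structures.
From mathcomp Require Import all_boot all_order all_algebra all_fingroup.
From mathcomp Require Import all_classical all_reals all_analysis.
From mathcomp Require Import Rstruct Rstruct_topology.
Set Implicit Arguments. Unset Strict Implicit. Unset Printing Implicit Defensive.
Import Order.TTheory GRing.Theory Num.Theory.
Import numFieldNormedType.Exports.

Definition simple_graph (n : nat) (e : rel 'I_n) : Prop :=
  symmetric e /\ irreflexive e.

Definition connected_graph (n : nat) (e : rel 'I_n) : Prop :=
  forall u v : 'I_n, connect e u v.

Definition bipartite (n : nat) (e : rel 'I_n) : Prop :=
  exists c : 'I_n -> bool, forall u v, e u v -> c u != c v.

Definition degenerate (d n : nat) (e : rel 'I_n) : Prop :=
  exists p : {perm 'I_n},
    forall i : 'I_n, #|[set j : 'I_n | (i <= j)%N && e (p i) (p j)]| <= d.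

Definition induced (n : nat) (e : rel 'I_n) (S : {set 'I_n}) : rel 'I_n :=
  fun u v => [&& u \in S, v \in S & e u v].

Definition is_cds (n : nat) (e : rel 'I_n) (S : {set 'I_n}) : Prop :=
  (forall v, v \notin S -> exists2 u, u \in S & e v u) /\
  (forall u v, u \in S -> v \in S -> connect (induced e S) u v).

Definition minimal_cds (n : nat) (e : rel 'I_n) (S : {set 'I_n}) : Prop :=
  is_cds e S /\ forall T : {set 'I_n}, T \proper S -> ~ is_cds e T.

Definition num_minimal_cds (n : nat) (e : rel 'I_n) : nat :=
  #|[set S : {set 'I_n} | `[< minimal_cds e S >] ]|.

Local Open Scope ring_scope.
Local Open Scope classical_set_scope.

(* Planarity: G has a drawing in the plane R^2 (= R * R), i.e. distinct points
   for the vertices and, for each edge uv, an arc (a continuous injective image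
   of [0,1]) from pos u to pos v, such that no arc passes through a vertex other
   than at its endpoints, and arcs of distinct edges meet only at their
   endpoints. *)
Definition unit_int (R : realType) : set R := [set t | 0 <= t <= 1].

Arguments unit_int R : clear implicits.

Definition planar_in (R : realType) (n : nat) (e : rel 'I_n) : Prop :=
  exists (pos : 'I_n -> (R * R)%type) (arc : 'I_n -> 'I_n -> R -> (R * R)%type),
    injective pos /\
    (forall u v, e u v ->
       [/\ {within unit_int R, continuous (arc u v)},
           {in unit_int R &, injective (arc u v)},
           arc u v 0 = pos u & arc u v 1 = pos v]) /\
    (forall u v w t, e u v -> 0 < t < 1 -> arc u v t <> pos w) /\
    (forall u v u' v' t t', e u v -> e u' v' ->
       ~ ((u = u' /\ v = v') \/ (u = v' /\ v = u')) ->
       unit_int R t -> unit_int R t' -> arc u v t = arc u' v' t' ->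
       (t = 0 \/ t = 1) /\ (t' = 0 \/ t' = 1)).

Definition planar (n : nat) (e : rel 'I_n) : Prop :=
  planar_in Rdefinitions.R e.

(* Main.v *)
Require Import Defs.
From HB Require Import structures.
From mathcomp Require Import all_boot all_order all_algebra all_fingroup.
From mathcomp Require Import all_classical all_reals all_analysis.
From mathcomp Require Import Rstruct Rstruct_topology.
From mathcomp Require Import ring lra zify.
Import Order.TTheory GRing.Theory Num.Theory.

Set Implicit Arguments. Unset Strict Implicit. Unset Printing Implicit Defensive.

Definition ledir (a b : nat) : bool :=
  [|| [&& a < 3, 3 <= b, b < 6 & b != a + 3], [&& a == 6, 3 <= b & b < 6]
    | (a == 7) && (b < 3)].
Definition ledge (a b : nat) : bool := ledir a b || ledir b a.

Definition tbl : seq (seq nat) :=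
  [:: [:: 6;4;0]; [:: 6;5;0]; [:: 6;3;1]; [:: 6;5;1]; [:: 6;3;2]; [:: 6;4;2];
      [:: 0;1;3]; [:: 0;1;4]; [:: 0;1;5]; [:: 0;2;3]; [:: 0;2;4]; [:: 0;2;5];
      [:: 1;2;3]; [:: 1;2;4]; [:: 1;2;5]].
Definition QQ (m d : nat) : bool := (d == 7) || (d \in nth [::] tbl m).

Definition step (P : nat -> bool) (R : seq nat) : seq nat :=
  R ++ [seq y <- iota 0 8 | (y \notin R) && P y && has (fun x => P x && ledge x y) R].
Definition reach (P : nat -> bool) (a : nat) : seq nat := iter 8 (step P) [:: a].

Fixpoint blists (n : nat) : seq (seq bool) :=
  if n is n'.+1 then [seq b :: l | b <- [:: false; true], l <- blists n'] else [:: [::]].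

Definition L8 := iota 0 8.

Definition check1 := all (fun m =>
  all (fun d => ~~ QQ m d ==> has (fun j => QQ m j && ledge d j) L8) L8 &&
  all (fun a => QQ m a ==> (7 \in reach (QQ m) a)) L8) (iota 0 15).

Definition check2 := all (fun l => let P := nth false l in
  let conn := all (fun a => P a ==> (7 \in reach P a)) L8 in
  (P 7 && conn) ==> all (fun m =>
  (all (fun d => P d ==> QQ m d) L8 &&
      all (fun d => ~~ QQ m d ==> has (fun j => P j && ledge d j) L8) L8) ==> all (fun d => QQ m d ==> P d) L8)
  (iota 0 15)) (blists 8).

Definition checkR := all (fun l => let P := nth false l in
  all (fun a => let R := reach P a in all (fun x => all (fun y =>
     (x \in R) ==> P x ==> P y ==> ledge x y ==> (y \in R)) L8) L8) L8)
  (blists 8).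

Definition check3 := all (fun m => all (fun m' =>
   all (fun d => QQ m d == QQ m' d) L8 ==> (m == m')) (iota 0 15)) (iota 0 15).

Definition checkM := [&& all (fun a => ~~ ledge a a) L8,
  all (fun a => 7 \in reach (fun x => x < 8) a) L8,
  all (fun a => all (fun b => ledge a b ==> (((a==7) || (3 <= a < 6)) != ((b==7) || (3 <= b < 6)))) L8) L8 &
  all (fun a => (a != 7) ==> (count (ledge a) L8 <= 3)) L8].




Set Implicit Arguments. Unset Strict Implicit. Unset Printing Implicit Defensive.

Lemma allL8 (p : pred nat) : all p L8 -> forall d, d < 8 -> p d.
Proof. by move=> /allP H d Hd; apply: H; rewrite mem_iota. Qed.

Lemma all15 (p : pred nat) : all p (iota 0 15) -> forall d, d < 15 -> p d.
Proof. by move=> /allP H d Hd; apply: H; rewrite mem_iota. Qed.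

Lemma blists_mem n (l : seq bool) : size l = n -> l \in blists n.
Proof.
elim: n l => [|n IH] [|b l] // [Hs]. rewrite [blists _]/=.
have H := IH _ Hs.
rewrite !mem_cat; case: b.
  by rewrite (map_f (fun l0 => true :: l0) H) orbT.
by rewrite (map_f (fun l0 => false :: l0) H).
Qed.

Lemma reach_conn (T : finType) (r : rel T) (h : nat -> T) (P : nat -> bool) a :
  a < 8 ->
  (forall x y, x < 8 -> y < 8 -> P x -> P y -> ledge x y -> r (h x) (h y)) ->
  forall y, y \in reach P a -> connect r (h a) (h y).
Proof.
move=> a8 Hr.
suff H: forall N y, y \in iter N (step P) [:: a] -> y < 8 /\ connect r (h a) (h y).
  by move=> y /H [].
elim=> [|i IH] y /=.
  by rewrite inE => /eqP ->; split => //; exact: connect0.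
rewrite /step mem_cat => /orP [/IH //|].
rewrite mem_filter => /andP [/andP [/andP [_ Py] /hasP [x xR /andP [Px lxy]]] y8].
have [x8 cx] := IH x xR.
have y8' : y < 8 by move: y8; rewrite mem_iota.
split => //; apply: connect_trans cx _; apply: connect1; exact: Hr.
Qed.

Lemma reach_mem P a : a \in reach P a.
Proof.
rewrite /reach; move: 8 => N; elim: N => [|i IH] /=; first by rewrite inE.
by rewrite /step mem_cat IH.
Qed.

Lemma closed_conn (T : finType) (r : rel T) (A : pred T) :
  (forall x y, A x -> r x y -> A y) -> forall x y, A x -> connect r x y -> A y.
Proof.
move=> H x y Ax /connectP [p pth ->] {y}.
elim: p x Ax pth => //= z p IH x Ax /andP [rxz pz]; apply: IH pz; exact: H rxz.
Qed.

Lemma c1' : check1. Proof. vm_compute. reflexivity. Qed.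
Lemma c2' : check2. Proof. vm_compute. reflexivity. Qed.
Lemma c3' : check3. Proof. vm_compute. reflexivity. Qed.
Lemma cR' : checkR. Proof. vm_compute. reflexivity. Qed.
Lemma cM' : checkM. Proof. vm_compute. reflexivity. Qed.

Section Graph.
Variable k : nat.

Local Notation n := (7 * k).+1.

Definition lc (v : nat) : nat := if v == 7 * k then 7 else v %% 7.
Definition cp (v : nat) : nat := v %/ 7.
Definition G : rel 'I_n := fun u v =>
  ((lc u == 7) || (lc v == 7) || (cp u == cp v)) && ledge (lc u) (lc v).
Definition glob (c d : nat) : 'I_n := inord (if d == 7 then 7 * k else 7 * c + d).
Definition sv : 'I_n := ord_max.

Lemma val_glob c d : c < k -> d < 8 -> nat_of_ord (glob c d) = if d == 7 then 7 * k else 7 * c + d.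
Proof. move=> ck d8; rewrite /glob inordK //; case: ifP => /eqP; lia. Qed.

Lemma lc_glob c d : c < k -> d < 8 -> lc (glob c d) = d.
Proof.
move=> ck d8; rewrite /lc val_glob //; case: (d =P 7) => [->|/eqP dn]; first by rewrite eqxx.
have -> : (7 * c + d == 7 * k) = false by apply/eqP; lia.
apply/eqP; lia.
Qed.

Lemma cp_glob c d : c < k -> d < 7 -> cp (glob c d) = c.
Proof.
move=> ck d7; rewrite /cp val_glob //; last by lia.
have -> : (d == 7) = false by apply/eqP; lia.
apply/eqP; lia.
Qed.

Lemma lc_lt (v : 'I_n) : lc v < 8.
Proof. rewrite /lc; case: ifP => // _; apply: ltn_trans (ltn_pmod _ _) _ => //. Qed.

Lemma lc7 (v : 'I_n) c : c < k -> lc v = 7 -> v = glob c 7.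
Proof.
move=> ck; rewrite /lc; case: ifP => [/eqP H _|_ H].
  by apply: val_inj; rewrite /= val_glob.
have := ltn_pmod v (isT : 0 < 7); lia.
Qed.

Lemma sv_glob c : c < k -> glob c 7 = sv.
Proof. by move=> ck; apply: val_inj; rewrite /= val_glob. Qed.

Lemma lcn (v : 'I_n) : lc v < 7 -> cp v < k /\ v = glob (cp v) (lc v).
Proof.
rewrite /lc /cp; case: ifP => [//|/eqP H _].
have vl := ltn_ord v.
have ck : v %/ 7 < k by lia.
split => //; apply: val_inj; rewrite /= val_glob //; last by lia.
have -> : (v %% 7 == 7) = false by apply/eqP; lia.
lia.
Qed.

Lemma G_glob c a b : c < k -> a < 8 -> b < 8 -> G (glob c a) (glob c b) = ledge a b.
Proof.
move=> ck a8 b8; rewrite /G !lc_glob //.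
case: (a =P 7) => [-> //|/eqP a7]; case: (b =P 7) => [-> //|/eqP b7] /=.
by rewrite !cp_glob ?eqxx //; lia.
Qed.

Lemma G_nbr c a (v : 'I_n) : c < k -> a < 7 -> G (glob c a) v ->
  exists b, [/\ b < 8, v = glob c b & ledge a b].
Proof.
move=> ck a7; rewrite /G lc_glob //; last by lia.
move=> /andP [H L]; exists (lc v); split => //; first exact: lc_lt.
case: (lc v =P 7) => [E|/eqP E]; first by rewrite E; exact: lc7.
have lv7 : lc v < 7 by have := lc_lt v; lia.
have [cvk Ev] := lcn lv7.
move: H; rewrite (_ : (a == 7) = false) ?(negbTE E) /=; last by apply/eqP; lia.
rewrite cp_glob //.
by move=> /eqP cE; rewrite {1}Ev -cE.
Qed.

End Graph.

Section Main.
Variable k : nat.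
Hypothesis k2 : 1 < k.
Local Notation n := (7 * k).+1.
Local Notation G := (@G k).
Local Notation glob := (@glob k).
Local Notation lc := (@lc k).
Local Notation sv := (@sv k).

Lemma k0 : 0 < k. Proof. by apply: ltn_trans k2. Qed.

Lemma lc_sv : lc sv = 7.
Proof. by rewrite /lc /sv /= eqxx. Qed.

Lemma vdec (v : 'I_n) : v = sv \/ exists c a, [/\ c < k, a < 7 & v = glob c a].
Proof.
case: (lc v =P 7) => [E|/eqP E].
  by left; rewrite (lc7 k0 E) sv_glob //; exact: k0.
have lv7 : lc v < 7 by have := lc_lt v; lia.
have [ck Ev] := lcn lv7.
by right; exists (cp v), (lc v); split.
Qed.

Lemma mchk : [&& all (fun a => ~~ ledge a a) L8,
  all (fun a => 7 \in reach (fun x => x < 8) a) L8,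
  all (fun a => all (fun b => ledge a b ==> (((a==7) || (3 <= a < 6)) != ((b==7) || (3 <= b < 6)))) L8) L8 &
  all (fun a => (a != 7) ==> (count (ledge a) L8 <= 3)) L8].
Proof. exact: cM'. Qed.

Lemma G_sym : symmetric G.
Proof.
move=> u v; rewrite /G /ledge (orbC (lc u == 7)) (orbC (ledir (lc u) _)).
by rewrite [cp u == _]eq_sym.
Qed.

Lemma G_irr : irreflexive G.
Proof.
move=> u; rewrite /G; have /and4P [m1 _ _ _] := mchk.
by rewrite (negbTE (allL8 m1 (lc_lt u))) andbF.
Qed.

Lemma G_conn_sv (u : 'I_n) : connect G u sv.
Proof.
have /and4P [_ m2 _ _] := mchk.
case: (vdec u) => [->|[c [a [ck a7 ->]]]]; first exact: connect0.
rewrite -(sv_glob ck).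
apply: (reach_conn (P := fun x => x < 8)); first by lia.
  by move=> x y x8 y8 _ _ lxy; rewrite G_glob.
by apply: (allL8 m2); lia.
Qed.

Lemma G_connected (u v : 'I_n) : connect G u v.
Proof.
apply: connect_trans (G_conn_sv u) _.
by rewrite (sym_connect_sym G_sym); exact: G_conn_sv.
Qed.

Lemma G_bip : exists col : 'I_n -> bool, forall u v, G u v -> col u != col v.
Proof.
exists (fun u => (lc u == 7) || (3 <= lc u < 6)) => u v /andP [_ L].
have /and4P [_ _ m3 _] := mchk.
by have := allL8 (allL8 m3 (lc_lt u)) (lc_lt v); rewrite L.
Qed.

Lemma G_degen : exists p : {perm 'I_n},
    forall i : 'I_n, #|[set j : 'I_n | (i <= j)%N && G (p i) (p j)]| <= 3.
Proof.
exists 1%g => i.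
have /and4P [_ _ _ m4] := mchk.
case: (vdec i) => [->|[c [a [ck a7 ->]]]].
  rewrite (_ : [set j | _] = finset.set0) ?cards0 //; apply/setP => j; rewrite !inE !perm1.
  apply/negbTE/negP => /andP [ij]; have -> : j = sv.
    by apply: val_inj => /=; move: ij (ltn_ord j); rewrite /sv /=; lia.
  by rewrite G_irr.
set s := map (glob c) (seq.filter (ledge a) L8) : seq 'I_n.
apply: (@leq_trans #|s|).
  apply: subset_leq_card; apply/fintype.subsetP => j; rewrite inE !perm1 => /andP [_ Gj].
  have [b [b8 -> lab]] := G_nbr ck a7 Gj.
  by apply: map_f; rewrite mem_filter lab mem_iota.
apply: leq_trans (card_size _) _; rewrite size_map size_filter.
by apply: (implyP (allL8 m4 (_ : a < 8))); [lia | apply/eqP; lia].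
Qed.


Definition fc (f : {ffun 'I_k -> 'I_15}) (c : nat) : nat :=
  oapp (fun i : 'I_k => nat_of_ord (f i)) 0 (insub c).

Lemma fc_lt f c : fc f c < 15.
Proof. rewrite /fc; case: (insub c : option 'I_k) => [i|] //=. Qed.

Lemma fc_ord f (i : 'I_k) : fc f i = f i.
Proof. by rewrite /fc (_ : insub (nat_of_ord i) = Some i) //; exact: valK. Qed.

Definition Sset (f : {ffun 'I_k -> 'I_15}) : {set 'I_n} :=
  [set v : 'I_n | QQ (fc f (cp v)) (lc v)].

Lemma QQ7 m : QQ m 7. Proof. by rewrite /QQ eqxx. Qed.

Lemma mem_S f c d : c < k -> d < 8 -> (glob c d \in Sset f) = QQ (fc f c) d.
Proof.
move=> ck d8; rewrite inE lc_glob //.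
case: (d =P 7) => [->|/eqP d7]; first by rewrite !QQ7.
by rewrite cp_glob //; lia.
Qed.

Lemma sv_S f : sv \in Sset f.
Proof. by rewrite inE lc_sv QQ7. Qed.

Lemma induced_sym (S : {set 'I_n}) : symmetric (Defs.induced G S).
Proof. by move=> u v; rewrite /Defs.induced G_sym andbCA. Qed.

Lemma chk1 m : m < 15 ->
  all (fun d => ~~ QQ m d ==> has (fun j => QQ m j && ledge d j) L8) L8 &&
  all (fun a => QQ m a ==> (7 \in reach (QQ m) a)) L8.
Proof. by move=> m15; apply: (all15 c1' m15). Qed.

Lemma S_cds f : is_cds G (Sset f).
Proof.
split.
  move=> v; case: (vdec v) => [->|[c [a [ck a7 ->]]]]; first by rewrite sv_S.
  rewrite mem_S //; last by lia.
  move=> nQ; have /andP [h1 _] := chk1 (fc_lt f c).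
  have a8 : a < 8 by lia.
  move: (allL8 h1 a8) => /implyP/(_ nQ)/hasP [j jL /andP [Qj lj]].
  have j8 : j < 8 by move: jL; rewrite mem_iota.
  by exists (glob c j); rewrite ?mem_S ?G_glob //; lia.
suff H : forall u, u \in Sset f -> connect (Defs.induced G (Sset f)) u sv.
  move=> u v uS vS; apply: connect_trans (H u uS) _.
  by rewrite (sym_connect_sym (induced_sym _)); exact: H.
move=> u; case: (vdec u) => [-> _|[c [a [ck a7 ->]]]]; first exact: connect0.
rewrite mem_S //; last by lia.
move=> Qa; have /andP [_ h2] := chk1 (fc_lt f c).
rewrite -(sv_glob ck); apply: (reach_conn (P := QQ (fc f c))); first by lia.
  by move=> x y x8 y8 Qx Qy lxy; rewrite /Defs.induced !mem_S ?G_glob // Qx Qy.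
have a8 : a < 8 by lia.
exact: (implyP (allL8 h2 a8) Qa).
Qed.


Lemma ledge67 : ledge 6 7 = false. Proof. by []. Qed.

Lemma sv_T (T : {set 'I_n}) : is_cds G T -> sv \in T.
Proof.
move=> [Hd Hc]; case/boolP: (sv \in T) => // snT; exfalso.
have [u uT Gu] := Hd _ snT.
case: (vdec u) Gu uT => [->|[c [a [ck a7 ->]]]]; first by rewrite G_irr.
move=> _ uT.
set c1 := if c == 0 then 1 else 0.
have c1k : c1 < k by rewrite /c1; case: ifP => _; lia.
have c1c : c1 != c by rewrite /c1; case: (c =P 0) => [->|/eqP]; lia.
have [b [b7 wT]] : exists b, b < 7 /\ glob c1 b \in T.
  case/boolP: (glob c1 6 \in T) => [zT|znT]; first by exists 6.
  have [w wT Gw] := Hd _ znT.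
  have [b [b8 Ew lb]] := G_nbr c1k (isT : 6 < 7) Gw.
  exists b; split; last by rewrite -Ew.
  by case: (b =P 7) lb => [->|/eqP]; [rewrite ledge67 | lia].
have := Hc _ _ uT wT.
move/(closed_conn (A := fun x : 'I_n => (lc x != 7) && (cp x == c))) => H.
apply/negP: c1c; apply/negPn.
have a8 : a < 8 by lia.
have b8 : b < 8 by lia.
move: H; rewrite !lc_glob ?cp_glob // eqxx => H.
suff /andP [_ //] : (b != 7) && (c1 == c).
apply: H; last by apply/andP; split => //; apply/eqP; lia.
move=> x y /andP [lx /eqP cx] /and3P [xT yT Gxy].
case: (vdec x) lx cx Gxy => [->|[c' [a' [ck' a7' ->]]]]; first by rewrite lc_sv.
rewrite cp_glob // => _ <- Gxy.
have [b' [b8' Ey lb]] := G_nbr ck' a7' Gxy.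
case: (b' =P 7) Ey => [-> E|/eqP b7' E].
  by move: yT; rewrite E sv_glob // (negbTE snT).
by rewrite E lc_glob ?cp_glob //; try lia; apply/andP; split => //; apply/eqP; lia.
Qed.


Lemma chk2 (l : seq bool) : size l = 8 ->
  let P := nth false l in
  let conn := all (fun a => P a ==> (7 \in reach P a)) L8 in
  (P 7 && conn) ==> all (fun m =>
  (all (fun d => P d ==> QQ m d) L8 &&
      all (fun d => ~~ QQ m d ==> has (fun j => P j && ledge d j) L8) L8) ==> all (fun d => QQ m d ==> P d) L8)
  (iota 0 15).
Proof. move=> sl; have /allP H := c2'; exact: H _ (blists_mem sl). Qed.

Lemma chkR (l : seq bool) : size l = 8 -> let P := nth false l in
  all (fun a => let R := reach P a in all (fun x => all (fun y =>
     (x \in R) ==> P x ==> P y ==> ledge x y ==> (y \in R)) L8) L8) L8.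
Proof. move=> sl; have /allP H := cR'; exact: H _ (blists_mem sl). Qed.

Lemma chkR' (l : seq bool) a x y : size l = 8 -> a < 8 -> x < 8 -> y < 8 ->
  x \in reach (nth false l) a -> nth false l x -> nth false l y -> ledge x y ->
  y \in reach (nth false l) a.
Proof.
move=> sl a8 x8 y8 hx hPx hPy hl.
move: (allL8 (allL8 (allL8 (chkR sl) a8) x8) y8).
by move=> /implyP/(_ hx)/implyP/(_ hPx)/implyP/(_ hPy)/implyP/(_ hl).
Qed.

Lemma S_min f (T : {set 'I_n}) : T \proper Sset f -> ~ is_cds G T.
Proof.
move=> pT cT; have svT := sv_T cT; case: cT => [Hd Hc].
move: pT; rewrite properE => /andP [TS]; apply/negP/negPn.
suff H : forall c a, c < k -> a < 8 -> QQ (fc f c) a -> glob c a \in T.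
  apply/fintype.subsetP => v; case: (vdec v) => [-> //|[c [a [ck a7 ->]]]].
  rewrite mem_S //; last by lia.
  by apply: H => //; lia.
move=> c a ck a8.
set m := fc f c.
set l := [seq glob c d \in T | d <- L8].
have sl : size l = 8 by rewrite size_map size_iota.
have Pl : forall d, d < 8 -> nth false l d = (glob c d \in T).
  by move=> d d8; rewrite (nth_map 0) ?size_iota // nth_iota.
have Hpre : nth false l 7 && all (fun a => nth false l a ==> (7 \in reach (nth false l) a)) L8.
  apply/andP; split; first by rewrite Pl // sv_glob.
  apply/allP => a' a'L; have a'8 : a' < 8 by move: a'L; rewrite mem_iota.
  apply/implyP; rewrite Pl // => a'T.
  apply/negPn/negP => n7.
  pose A := fun x : 'I_n => [&& lc x != 7, cp x == c & lc x \in reach (nth false l) a'].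
  suff : A sv by rewrite /A lc_sv.
  apply: (closed_conn (A := A) _ _ (Hc _ _ a'T svT)).
  - move=> x y /and3P [lx /eqP cx rx] /and3P [xT yT Gxy].
    case: (vdec x) lx cx rx xT Gxy => [->|[c' [a2 [ck' a7' ->]]]]; first by rewrite lc_sv.
    have a28 : a2 < 8 by lia.
    rewrite cp_glob // lc_glob // => _ E; subst c' => ra xT Gxy.
    have [b' [b8' Ey lb]] := G_nbr ck a7' Gxy.
    move: yT; rewrite Ey => yT.
    have rb : b' \in reach (nth false l) a'.
      by apply: (chkR' sl a'8 a28 b8' ra); rewrite ?Pl.
    case: (b' =P 7) rb => [-> r7|/eqP b7 rb]; first by rewrite r7 in n7.
    by rewrite /A lc_glob ?cp_glob ?eqxx ?rb //; try lia; rewrite andbT; apply/eqP; lia.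
  - case: (a' =P 7) => [E|/eqP a7].
      by move: n7; rewrite -{1}E reach_mem.
    rewrite /A lc_glob ?cp_glob ?eqxx ?reach_mem //; try lia; rewrite andbT; apply/eqP; lia.
have m15 : m \in iota 0 15 by rewrite mem_iota; exact: fc_lt.
move: (chk2 sl) => /implyP/(_ Hpre)/allP/(_ m m15)/implyP H2 Qa.
have Hpre2 : all (fun d => nth false l d ==> QQ m d) L8 &&
      all (fun d => ~~ QQ m d ==> has (fun j => nth false l j && ledge d j) L8) L8.
  apply/andP; split.
    apply/allP => d dL; have d8 : d < 8 by move: dL; rewrite mem_iota.
    apply/implyP; rewrite Pl // => dT.
    by rewrite -mem_S //; exact: (fintype.subsetP TS).
  apply/allP => d dL; have d8 : d < 8 by move: dL; rewrite mem_iota.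
  apply/implyP => nQ.
  have d7 : d != 7 by apply: contraNneq nQ => ->; rewrite QQ7.
  have ndT : glob c d \notin T.
    by apply: contraNN nQ => dT; rewrite -mem_S //; exact: (fintype.subsetP TS).
  have [u uT Gu] := Hd _ ndT.
  have d7' : d < 7 by clear - d7 d8; lia.
  have [b' [b8' Eu lb]] := G_nbr ck d7' Gu.
  apply/hasP; exists b'; first by rewrite mem_iota.
  by rewrite Pl // -Eu uT lb.
have aL : a \in L8 by rewrite mem_iota.
by move: (H2 Hpre2) => /allP/(_ a aL)/implyP/(_ Qa); rewrite Pl.
Qed.

Lemma S_minimal f : minimal_cds G (Sset f).
Proof. split; [exact: S_cds | exact: S_min]. Qed.

Lemma chk3 m m' : m < 15 -> m' < 15 -> all (fun d => QQ m d == QQ m' d) L8 ==> (m == m').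
Proof. move=> h h'; exact: (all15 (all15 c3' h) h'). Qed.

Lemma S_inj : injective Sset.
Proof.
move=> f g E; apply/ffunP => i.
have ck := ltn_ord i.
have H : all (fun d => QQ (fc f i) d == QQ (fc g i) d) L8.
  apply/allP => d dL; have d8 : d < 8 by move: dL; rewrite mem_iota.
  by rewrite -!mem_S // E.
move: (chk3 (fc_lt f i) (fc_lt g i)) => /implyP/(_ H)/eqP.
by rewrite !fc_ord => /val_inj.
Qed.

End Main.




Unset Implicit Arguments. Set Strict Implicit.
Local Open Scope ring_scope.
Local Open Scope classical_set_scope.

Local Notation R := Rdefinitions.R.

Definition rx (d : nat) : R := match d with 0 => 4 | 1 => 0 | 2 => 1 | 3 => 1 | 4 => 3 | 5 => 4 | 6 => 3 | _ => 0 end.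
Definition ry (d : nat) : R := match d with 0 => 0 | 1 => 4 | 2 => 1 | 3 => 3 | 4 => 1 | 5 => 4 | 6 => 3 | _ => 0 end.
Definition sx a b (t : R) := (1 - t) * rx a + t * rx b.
Definition sy a b (t : R) := (1 - t) * ry a + t * ry b.

Ltac c8 := case=> [|[|[|[|[|[|[|[|?]]]]]]]] //.

Lemma cross_dir a b a' b' (t t' : R) : (a < 8)%N -> (b < 8)%N -> (a' < 8)%N -> (b' < 8)%N ->
  ledir a b -> ledir a' b' -> ~~ ((a == a') && (b == b')) ->
  0 <= t <= 1 -> 0 <= t' <= 1 -> sx a b t = sx a' b' t' -> sy a b t = sy a' b' t' ->
  (t = 0 \/ t = 1) /\ (t' = 0 \/ t' = 1).
Proof.
move: a b a' b'; c8; c8; c8; c8; rewrite /sx /sy /= => _ _ _ _ _ _ _ /andP [? ?] /andP [? ?] ? ?;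
  split; first [left; lra | right; lra].
Qed.

Lemma sx_flip a b t : sx b a t = sx a b (1 - t).
Proof. rewrite /sx; ring. Qed.
Lemma sy_flip a b t : sy b a t = sy a b (1 - t).
Proof. rewrite /sy; ring. Qed.

Lemma flip01 (t : R) : (1 - t = 0 \/ 1 - t = 1) -> (t = 0 \/ t = 1).
Proof. case=> H; [right|left]; lra. Qed.

Lemma unit_flip {t : R} : 0 <= t <= 1 -> 0 <= 1 - t <= 1.
Proof. move=> /andP [h1 h2]; apply/andP; split; lra. Qed.

Lemma cross_edge a b a' b' (t t' : R) : (a < 8)%N -> (b < 8)%N -> (a' < 8)%N -> (b' < 8)%N ->
  ledge a b -> ledge a' b' -> ~ ((a = a' /\ b = b') \/ (a = b' /\ b = a')) ->
  0 <= t <= 1 -> 0 <= t' <= 1 -> sx a b t = sx a' b' t' -> sy a b t = sy a' b' t' ->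
  (t = 0 \/ t = 1) /\ (t' = 0 \/ t' = 1).
Proof.
move=> a8 b8 a8' b8' /orP [l1|l1] /orP [l2|l2] nd ht ht' ex ey.
- have nd' : ~~ ((a == a') && (b == b')).
    by apply/negP => /andP [/eqP e1 /eqP e2]; apply: nd; left.
  exact: (cross_dir a b a' b' t t' a8 b8 a8' b8' l1 l2 nd' ht ht' ex ey).
- rewrite (sx_flip b' a') (sy_flip b' a') in ex ey.
  have nd' : ~~ ((a == b') && (b == a')).
    by apply/negP => /andP [/eqP e1 /eqP e2]; apply: nd; right.
  have [h1 h2] := cross_dir a b b' a' t (1 - t') a8 b8 b8' a8' l1 l2 nd' ht (unit_flip ht') ex ey.
  by split => //; exact: flip01.
- rewrite (sx_flip b a) (sy_flip b a) in ex ey.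
  have nd' : ~~ ((b == a') && (a == b')).
    by apply/negP => /andP [/eqP e1 /eqP e2]; apply: nd; right.
  have [h1 h2] := cross_dir b a a' b' (1 - t) t' b8 a8 a8' b8' l1 l2 nd' (unit_flip ht) ht' ex ey.
  by split => //; exact: flip01.
- rewrite (sx_flip b a) (sy_flip b a) (sx_flip b' a') (sy_flip b' a') in ex ey.
  have nd' : ~~ ((b == b') && (a == a')).
    by apply/negP => /andP [/eqP e1 /eqP e2]; apply: nd; left.
  have [h1 h2] := cross_dir b a b' a' (1 - t) (1 - t') b8 a8 b8' a8' l1 l2 nd' (unit_flip ht) (unit_flip ht') ex ey.
  by split; exact: flip01.
Qed.

Lemma seg_avoid a b d (t : R) : (a < 8)%N -> (b < 8)%N -> (d < 8)%N -> ledge a b ->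
  0 < t < 1 -> sx a b t = rx d -> sy a b t = ry d -> False.
Proof.
move: a b d; c8; c8; c8; rewrite /sx /sy /= => _ _ _ _ /andP [? ?] ? ?; lra.
Qed.

Lemma seg_inj a b (t1 t2 : R) : (a < 8)%N -> (b < 8)%N -> ledge a b ->
  sx a b t1 = sx a b t2 -> sy a b t1 = sy a b t2 -> t1 = t2.
Proof.
move: a b; c8; c8; rewrite /sx /sy /= => _ _ _ ? ?; lra.
Qed.

Lemma seg_zero a b (t : R) : (a < 8)%N -> (b < 8)%N -> ledge a b -> 0 <= t <= 1 ->
  [/\ 0 <= sx a b t, 0 <= sy a b t & (sx a b t + sy a b t = 0 -> t = 0 \/ t = 1)].
Proof.
move: a b; c8; c8; rewrite /sx /sy /= => _ _ _ /andP [? ?];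
  (split; [lra | lra | move=> ?; first [left; lra | right; lra]]).
Qed.

Lemma raw_inj a b : (a < 8)%N -> (b < 8)%N -> rx a = rx b -> ry a = ry b -> a = b.
Proof. move: a b; c8; c8; rewrite /= => _ _ ? ?; first [done | exfalso; lra]. Qed.

Lemma raw_pos a : (a < 7)%N -> 0 < rx a + ry a.
Proof. move: a; c8 => _ /=; lra. Qed.

Lemma raw_ge0 a : 0 <= rx a /\ 0 <= ry a.
Proof. do 7 (case: a => [|a]; first by rewrite /=; split; lra). by rewrite /=; split; lra. Qed.

Lemma aff_cont (A B : R) : continuous (fun t : R => A + t * B).
Proof.
move=> x.
apply: (@cvgD R R^o R (nbhs x) _ (cst A) (fun t : R => t * B)).
  exact: cvg_cst.
apply: (@cvgMr_tmp R R (nbhs x) _ id).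
exact: cvg_id.
Qed.

Definition PP (c x y : R) : R * R := (x + 2 * y + c * (3 * x + 3 * y), 3 * x + 3 * y).

Lemma PP_inj c x y x' y' : PP c x y = PP c x' y' -> x = x' /\ y = y'.
Proof.
case=> E1 E2; rewrite E2 in E1; split; lra.
Qed.

Lemma PP0 c c' : PP c 0 0 = PP c' 0 0.
Proof. by rewrite /PP; congr pair; ring. Qed.

Lemma PP_cont c a b : continuous (fun t => PP c (sx a b t) (sy a b t)).
Proof.
have e1 : (fun t => (PP c (sx a b t) (sy a b t)).1) =
    (fun t => (PP c (rx a) (ry a)).1 + t * ((PP c (rx b) (ry b)).1 - (PP c (rx a) (ry a)).1)).
  by apply: funext => s; rewrite /PP /sx /sy /=; ring.
have e2 : (fun t => (PP c (sx a b t) (sy a b t)).2) =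
  (fun t => (PP c (rx a) (ry a)).2 + t * ((PP c (rx b) (ry b)).2 - (PP c (rx a) (ry a)).2)).
  by apply: funext => s; rewrite /PP /sx /sy /=; ring.
have h1 := aff_cont ((PP c (rx a) (ry a)).1) ((PP c (rx b) (ry b)).1 - (PP c (rx a) (ry a)).1).
have h2 := aff_cont ((PP c (rx a) (ry a)).2) ((PP c (rx b) (ry b)).2 - (PP c (rx a) (ry a)).2).
rewrite -e1 in h1; rewrite -e2 in h2.
move=> t; exact: (@cvg_pair R R R (nbhs t) _ _ _ _ _ _ _ (h1 t) (h2 t)).
Qed.

Lemma wedge_lt (c c' : nat) x y x' y' : (c < c')%N ->
  0 <= x -> 0 <= y -> 0 < x + y -> 0 <= x' -> 0 <= y' -> 0 < x' + y' ->
  PP c%:R x y = PP c'%:R x' y' -> False.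
Proof.
move=> cc hx hy hs hx' hy' hs' [E1 E2].
have h : (c%:R + 1) <= c'%:R :> R by rewrite natr1 ler_nat.
have h2 : (c%:R + 1) * (3 * x + 3 * y) <= c'%:R * (3 * x + 3 * y).
  by apply: ler_wpM2r => //; lra.
rewrite E2 in h2.
move: E1 h2; rewrite E2; nra.
Qed.

Lemma wedge_disj (c c' : nat) x y x' y' : c != c' ->
  0 <= x -> 0 <= y -> 0 < x + y -> 0 <= x' -> 0 <= y' -> 0 < x' + y' ->
  PP c%:R x y = PP c'%:R x' y' -> False.
Proof.
move=> cc hx hy hs hx' hy' hs' E.
move: cc; case: (ltngtP c c') => // lt _.
  exact: (wedge_lt _ _ _ _ _ _ lt hx hy hs hx' hy' hs' E).
exact: (wedge_lt _ _ _ _ _ _ lt hx' hy' hs' hx hy hs (esym E)).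
Qed.

Set Implicit Arguments. Unset Strict Implicit.

Lemma sum_cases (s : R) : 0 <= s -> s = 0 \/ 0 < s.
Proof. move=> h; case: (lerP s 0) => h'; [left; lra | by right]. Qed.

Section Planar.
Variable k : nat.
Hypothesis k2 : (1 < k)%N.
Local Notation n := (7 * k).+1.

Definition pos (v : 'I_n) : R * R := PP (cp v)%:R (rx (lc k v)) (ry (lc k v)).
Definition ecp (u v : 'I_n) : nat := if lc k u == 7 then cp v else cp u.
Definition arc (u v : 'I_n) (t : R) : R * R :=
  PP (ecp u v)%:R (sx (lc k u) (lc k v) t) (sy (lc k u) (lc k v) t).

Lemma pos_e (u : 'I_n) (c : nat) : (lc k u = 7 \/ cp u = c) ->
  pos u = PP c%:R (rx (lc k u)) (ry (lc k u)).
Proof. by rewrite /pos; case=> [->|->] //; exact: PP0. Qed.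

Lemma G_ledge (u v : 'I_n) : G u v -> ledge (lc k u) (lc k v).
Proof. by case/andP. Qed.

Lemma edge_c (u v : 'I_n) : G u v ->
  (lc k u = 7 \/ cp u = ecp u v) /\ (lc k v = 7 \/ cp v = ecp u v).
Proof.
rewrite /G /ecp => /andP [H _].
case: ifP => [/eqP E|/negbT E]; first by split; [left|right].
split; first by right.
case: (lc k v =P 7) => [Ev|/eqP Ev]; first by left.
by right; move: H; rewrite (negbTE E) (negbTE Ev) /= => /eqP.
Qed.

Lemma same_vert (u u' : 'I_n) : lc k u = lc k u' -> (lc k u = 7 \/ cp u = cp u') -> u = u'.
Proof.
move=> El h; have k0' := k0 k2.
case: (lc k u =P 7) => [E|/eqP E].
  rewrite (lc7 k0' E) (lc7 k0' (_ : lc k u' = 7)) //; by rewrite -El.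
have lu : (lc k u < 7)%N by have := lc_lt u; move: E; clear; lia.
have lu' : (lc k u' < 7)%N by rewrite -El.
have [_ Eu] := lcn lu; have [_ Eu'] := lcn lu'.
case: h => [h|Ec]; first by rewrite h in E.
by rewrite Eu Eu' El Ec.
Qed.

Lemma same_from (x y : 'I_n) c : lc k x = lc k y ->
  (lc k x = 7 \/ cp x = c) -> (lc k y = 7 \/ cp y = c) -> x = y.
Proof.
move=> El [h|h] [h'|h']; apply: (same_vert (El)) => //.
- by left.
- by left.
- by left; rewrite El.
- by right; rewrite h h'.
Qed.

Lemma G_planar : planar (@G k).
Proof.
exists pos, arc; split; [|split; [|split]].
- move=> u w E.
  have hu := lc_lt u; have hw := lc_lt w.
  case: (lc k u =P 7) => [Eu|/eqP Eu]; case: (lc k w =P 7) => [Ew|/eqP Ew].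
  + by apply: same_vert; [rewrite Eu Ew | left].
  + exfalso; move: E; rewrite /pos Eu => -[_ E2].
    have lw : (lc k w < 7)%N by move: hw Ew; clear; lia.
    have := raw_pos _ lw; move: E2 => /=; lra.
  + exfalso; move: E; rewrite /pos Ew => -[_ E2].
    have lu : (lc k u < 7)%N by move: hu Eu; clear; lia.
    have := raw_pos _ lu; move: E2 => /=; lra.
  + have lw : (lc k w < 7)%N by move: hw Ew; clear; lia.
    have lu : (lc k u < 7)%N by move: hu Eu; clear; lia.
    case: (cp u =P cp w) => [Ec|/eqP Ec].
      move: E; rewrite /pos Ec => /PP_inj [e1 e2].
      exact: (same_vert (raw_inj _ _ hu hw e1 e2) (or_intror Ec)).
    exfalso; have [gu1 gu2] := raw_ge0 (lc k u); have [gw1 gw2] := raw_ge0 (lc k w).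
    exact: (wedge_disj _ _ _ _ _ _ Ec gu1 gu2 (raw_pos _ lu) gw1 gw2 (raw_pos _ lw) E).
- move=> u v Guv; have lg := G_ledge Guv; have [eu ev] := edge_c Guv.
  split.
  + apply: continuous_subspaceT; exact: PP_cont.
  + move=> t1 t2 _ _ /PP_inj [e1 e2]; exact: (seg_inj _ _ _ _ (lc_lt u) (lc_lt v) lg e1 e2).
  + by rewrite (pos_e eu) /arc /sx /sy; congr PP; ring.
  + by rewrite (pos_e ev) /arc /sx /sy; congr PP; ring.
- move=> u v w t Guv /andP [t0 t1] E.
  have lg := G_ledge Guv.
  have ht : 0 <= t <= 1 by apply/andP; split; lra.
  have [nx ny z] := seg_zero _ _ _ (lc_lt u) (lc_lt v) lg ht.
  have [s0|sp] := sum_cases (addr_ge0 nx ny).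
    by case: (z s0) => ?; lra.
  have hw := lc_lt w.
  case: (lc k w =P 7) => [Ew|/eqP Ew].
    by move: E; rewrite /arc /pos Ew => -[_ /= E2]; lra.
  have lw : (lc k w < 7)%N by move: hw Ew; clear; lia.
  case: (cp w =P ecp u v) => [Ec|/eqP Ec].
    move: E; rewrite /arc /pos Ec => /PP_inj [e1 e2].
    have ht2 : 0 < t < 1 by apply/andP.
    exact: (seg_avoid _ _ _ _ (lc_lt u) (lc_lt v) hw lg ht2 e1 e2).
  have [gw1 gw2] := raw_ge0 (lc k w).
  by apply: (wedge_disj _ _ _ _ _ _ _ nx ny sp gw1 gw2 (raw_pos _ lw) E); rewrite eq_sym.
- move=> u v u' v' t t' Guv Guv' nd ht ht' E.
  have lg := G_ledge Guv; have lg' := G_ledge Guv'.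
  have [nx ny z] := seg_zero _ _ _ (lc_lt u) (lc_lt v) lg ht.
  have [nx' ny' z'] := seg_zero _ _ _ (lc_lt u') (lc_lt v') lg' ht'.
  have E2 := f_equal snd E; rewrite /= in E2.
  case: (ecp u v =P ecp u' v') => [Ec|/eqP Ec].
    move: E; rewrite /arc Ec => /PP_inj [e1 e2].
    apply: (cross_edge _ _ _ _ _ _ (lc_lt u) (lc_lt v) (lc_lt u') (lc_lt v') lg lg' _ ht ht' e1 e2).
    have [eu ev] := edge_c Guv; have [eu' ev'] := edge_c Guv'.
    rewrite Ec in eu ev.
    move=> [[ea eb]|[ea eb]]; apply: nd; [left|right]; split.
    + exact: (same_from ea eu eu').
    + exact: (same_from eb ev ev').
    + exact: (same_from ea eu ev').
    + exact: (same_from eb ev eu').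
  have [s0|sp] := sum_cases (addr_ge0 nx ny).
    have s0' : sx (lc k u') (lc k v') t' + sy (lc k u') (lc k v') t' = 0 by lra.
    by split; [exact: z | exact: z'].
  have sp' : 0 < sx (lc k u') (lc k v') t' + sy (lc k u') (lc k v') t' by lra.
  by exfalso; apply: (wedge_disj _ _ _ _ _ _ Ec nx ny sp nx' ny' sp' E).
Qed.

End Planar.

Local Close Scope classical_set_scope.

Lemma key (k : nat) : (1 < k)%N ->
  [/\ simple_graph (@G k), connected_graph (@G k), degenerate 3 (@G k), bipartite (@G k)
    & planar (@G k)] /\ (15 ^ k <= num_minimal_cds (@G k))%N.
Proof.
move=> k2; split.
  split.
  - split; [exact: G_sym | exact: G_irr].
  - move=> u v; exact: G_connected.
  - exact: G_degen.
  - exact: G_bip.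
  - exact: G_planar.
rewrite /num_minimal_cds.
have <- : #|[set Sset f | f in [set: {ffun 'I_k -> 'I_15}]]| = (15 ^ k)%N.
  by rewrite card_imset ?cardsT ?card_ffun ?card_ord //; exact: S_inj.
apply: subset_leq_card; apply/fintype.subsetP => S /imsetP [f _ ->]; rewrite inE.
apply/asboolP; exact: S_minimal.
Qed.

Local Open Scope ring_scope.

Theorem mainTheorem14 :
  (forall N : nat, exists n : nat, (N <= n)%N /\
     exists e : rel 'I_n,
       [/\ simple_graph e, connected_graph e, degenerate 3 e, bipartite e
         & planar e] /\
       (15 : Rdefinitions.R) `^ ((n%:R - 1) / 7) <= (num_minimal_cds e)%:R)
  /\
  (exists c : Rdefinitions.R, 0 < c /\
     forall N : nat, exists n : nat, (N <= n)%N /\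
       exists e : rel 'I_n,
         [/\ simple_graph e, degenerate 3 e, bipartite e & planar e] /\
         c * (14723 / 10000) `^ n%:R <= (num_minimal_cds e)%:R).
Proof.
split.
  move=> N; exists (7 * N.+2).+1; split; first lia.
  have [[h1 h2 h3 h4 h5] hc] := key (isT : (1 < N.+2)%N).
  exists (@G N.+2); split; first by [].
  have -> : (((7 * N.+2).+1)%:R - 1) / 7 = (N.+2)%:R :> Rdefinitions.R.
    by rewrite -addn1 natrD natrM; field.
  rewrite powR_mulrn // -natrX ler_nat; exact: hc.
exists (10000 / 14723); split; first lra.
move=> N; exists (7 * N.+2).+1; split; first lia.
have [[h1 h2 h3 h4 h5] hc] := key (isT : (1 < N.+2)%N).
exists (@G N.+2); split; first by [].
rewrite powR_mulrn; last lra.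
set r : Rdefinitions.R := 14723 / 10000.
rewrite exprS mulrA (_ : 10000 / 14723 * r = 1); last by rewrite /r; field.
rewrite mul1r exprM.
apply: (@le_trans _ _ ((15 : Rdefinitions.R) ^+ N.+2)).
  apply: lerXn2r; rewrite ?nnegrE; first by apply: exprn_ge0; rewrite /r; lra.
    lra.
  by rewrite /r !exprS expr0; lra.
by rewrite -natrX ler_nat.
Qed.
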